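(* Let $M$ be a $po$-$\Gamma$-semigroup. The following are equivalent: (1) $M$ is completely regular. (2) $B(a)=B(a\Gamma a)=B(a\Gamma a\Gamma M\Gamma a\Gamma a)$ for every $a\in M$. (3) $B(a)=B(a\Gamma a)$ for every $a\in M$.
   Context: A $po$-$\Gamma$-semigroup is a triple $(M,\Gamma,\le)$ where $M,\Gamma$ are nonempty sets with a map $M\times\Gamma\times M\to M$, $(a,\gamma,b)\mapsto a\gamma b$, satisfying $(a\gamma b)\mu c=a\gamma(b\mu c)$ for all $a,b,c\in M$, $\gamma,\mu\in\Gamma$, and $\le$ is a partial order on $M$ such that $a\le b$ implies $a\gamma c\le b\gamma c$ and $c\gamma a\le c\gamma b$ for all $c\in M$, $\gamma\in\Gamma$. For $A,B\subseteq M$, $A\Gamma B=\{a\gamma b: a\in A,\gamma\in\Gamma,b\in B\}$ (with $a\Gamma B$ meaning $\{a\}\Gamma B$, etc.), and $(A]=\{t\in M: t\le a \text{ for some } a\in A\}$. $M$ is regular if $a\in(a\Gamma M\Gamma a]$ for all $a\in M$; left regular if $a\in(M\Gamma a\Gamma a]$ for all $a\in M$; right regular if $a\in(a\Gamma a\Gamma M]$ for all $a\in M$; completely regular if it is regular, left regular and right regular. A bi-ideal of $M$ is a nonempty subset $B\subseteq M$ such that $B\Gamma M\Gamma B\subseteq B$ and, whenever $a\in B$, $b\in M$ and $b\le a$, then $b\in B$. For a nonempty subset $A\subseteq M$, $B(A)$ denotes the bi-ideal of $M$ generated by $A$ (the smallest bi-ideal containing $A$), and $B(A)=(A\cup A\Gamma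 M\Gamma A]$; $B(a)$ means $B(\{a\})=(\{a\}\cup a\Gamma M\Gamma a]$. *)

(* Defs.v *)
Record poGammaSemigroup := {
  carrier :> Type;
  gam : Type;
  op : carrier -> gam -> carrier -> carrier;
  le : carrier -> carrier -> Prop;
  carrier_ne : inhabited carrier;
  gam_ne : inhabited gam;
  op_assoc : forall (a b c : carrier) (g m : gam),
      op (op a g b) m c = op a g (op b m c);
  le_refl : forall a, le a a;
  le_antisym : forall a b, le a b -> le b a -> a = b;
  le_trans : forall a b c, le a b -> le b c -> le a c;
  le_opr : forall a b c g, le a b -> le (op a g c) (op b g c);
  le_opl : forall a b c g, le a b -> le (op c g a) (op c g b)
}.

Section Defs.
Variable M : poGammaSemigroup.

Definition subset (A B : M -> Prop) : Prop := forall x, A x -> B x.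
Definition set_eq (A B : M -> Prop) : Prop := forall x, A x <-> B x.
Definition full : M -> Prop := fun _ => True.
Definition single (a : M) : M -> Prop := fun x => x = a.

Definition gprod (A B : M -> Prop) : M -> Prop :=
  fun x => exists a g b, A a /\ B b /\ x = op M a g b.

Definition down (A : M -> Prop) : M -> Prop :=
  fun t => exists a, A a /\ le M t a.

Definition regular : Prop :=
  forall a : M, down (gprod (gprod (single a) full) (single a)) a.
Definition left_regular : Prop :=
  forall a : M, down (gprod (gprod full (single a)) (single a)) a.
Definition right_regular : Prop :=
  forall a : M, down (gprod (gprod (single a) (single a)) full) a.
Definition completely_regular : Prop :=
  regular /\ left_regular /\ right_regular.

Definition bi_ideal (B : M -> Prop) : Prop :=
  (exists x, B x) /\
  subset (gprod (gprod B full) B) B /\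
  (forall a b : M, B a -> le M b a -> B b).

Definition bi_gen (A : M -> Prop) : M -> Prop :=
  fun x => forall B, bi_ideal B -> subset A B -> B x.

End Defs.

(* Main.v *)
Require Import Defs.

Section S.
Variable M : poGammaSemigroup.

Definition DD (A : M -> Prop) : M -> Prop :=
  down M (fun x => A x \/ gprod M (gprod M A (full M)) A x).

Lemma mkA (A : M -> Prop) a b g m g' :
  A a -> A b -> gprod M (gprod M A (full M)) A (op M (op M a g m) g' b).
Proof.
  intros Ha Hb. exists (op M a g m), g', b. split; [|split; auto].
  exists a, g, m. unfold full; auto.
Qed.

Lemma DD_bi (A : M -> Prop) : (exists x, A x) -> bi_ideal M (DD A).
Proof.
  intros [x0 Hx0]. split; [|split].
  - exists x0. exists x0. split; [left; auto | apply le_refl].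
  - intros x [p [g [q [[p' [g1 [m [[t [Ht Hpt]] [_ Hp']]]]] [[u [Hu Hqu]] Hx]]]]].
    subst x p.
    exists (op M (op M t g1 m) g u). split.
    + right.
      destruct Ht as [Ht|[p1 [h1 [a2 [[a1 [h0 [m1 [Ha1 [_ E1]]]]] [Ha2 E2]]]]]];
      destruct Hu as [Hu|[p2 [k1 [b2 [[b1 [k0 [m2 [Hb1 [_ F1]]]]] [Hb2 F2]]]]]];
      subst.
      * apply mkA; auto.
      * replace (op M (op M t g1 m) g (op M (op M b1 k0 m2) k1 b2))
          with (op M (op M t g1 (op M (op M m g b1) k0 m2)) k1 b2)
          by (rewrite !op_assoc; reflexivity).
        apply mkA; auto.
      * replace (op M (op M (op M (op M a1 h0 m1) h1 a2) g1 m) g u)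
          with (op M (op M a1 h0 (op M (op M m1 h1 a2) g1 m)) g u)
          by (rewrite !op_assoc; reflexivity).
        apply mkA; auto.
      * replace (op M (op M (op M (op M a1 h0 m1) h1 a2) g1 m) g (op M (op M b1 k0 m2) k1 b2))
          with (op M (op M a1 h0 (op M (op M (op M (op M m1 h1 a2) g1 m) g b1) k0 m2)) k1 b2)
          by (rewrite !op_assoc; reflexivity).
        apply mkA; auto.
    + apply le_trans with (op M (op M t g1 m) g q); [apply le_opr, le_opr|apply le_opl]; auto.
  - intros a b [t [Ht Hat]] Hba. exists t. split; auto. eapply le_trans; eauto.
Qed.

Lemma bi_gen_DD (A : M -> Prop) x : (exists y, A y) -> (bi_gen M A x <-> DD A x).
Proof.
  intros Hne. split.
  - intros H. apply H. apply DD_bi; auto. intros y Hy. exists y. split; [left; auto|apply le_refl].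
  - intros [t [Ht Hxt]] B [_ [HBB HBd]] HAB. apply (HBd t); auto.
    destruct Ht as [Ht|[p [g [b [[a [g' [m [Ha [_ E1]]]]] [Hb E2]]]]]].
    + apply HAB; auto.
    + apply HBB. exists p, g, b. split; [|split; auto].
      exists a, g', m. split; [apply HAB; auto|split; [exact I|auto]].
Qed.

Lemma bi_gen_self (A : M -> Prop) x : A x -> bi_gen M A x.
Proof. intros Hx B _ H. apply H; auto. Qed.

Lemma bi_gen_sub (A C : M -> Prop) :
  subset M A (bi_gen M C) -> subset M (bi_gen M A) (bi_gen M C).
Proof.
  intros H x Hx B HB HCB. apply Hx; auto. intros y Hy. apply (H y Hy B HB HCB).
Qed.

Lemma down_in (A : M -> Prop) x t : A t -> le M x t ->
  bi_gen M A x.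
Proof.
  intros Ht Hle. apply bi_gen_DD. eauto. exists t. split; auto.
Qed.

Lemma down_in2 (A : M -> Prop) x t : gprod M (gprod M A (full M)) A t -> le M x t ->
  bi_gen M A x.
Proof.
  intros Ht Hle. apply bi_gen_DD.
  destruct Ht as [p [g [b [_ [Hb _]]]]]. eauto. exists t. split; auto.
Qed.
End S.


Section T.
Variable M : poGammaSemigroup.

Lemma mk3 (X Y Z : M -> Prop) x y z g g' :
  X x -> Y y -> Z z -> gprod M (gprod M X Y) Z (op M (op M x g y) g' z).
Proof. intros. exists (op M x g y), g', z. split; [|split; auto]. exists x, g, y. auto. Qed.

Lemma set_eq_of (A B : M -> Prop) : subset M A B -> subset M B A -> set_eq M A B.
Proof. intros H1 H2 x; split; auto. Qed.

Lemma three_to_cr :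
  (forall a : M, set_eq M (bi_gen M (single M a)) (bi_gen M (gprod M (single M a) (single M a))))
  -> completely_regular M.
Proof.
  intros H.
  assert (K : forall a : M, exists g t, le M a t /\
     ( t = op M a g a \/ exists m g1 g2 g3, t = op M (op M (op M a g a) g1 m) g2 (op M a g3 a))).
  { intro a. destruct (gam_ne M) as [g0].
    assert (Ha : bi_gen M (gprod M (single M a) (single M a)) a).
    { apply H. apply bi_gen_self. reflexivity. }
    apply bi_gen_DD in Ha; [| exists (op M a g0 a), a, g0, a; unfold single; auto].
    destruct Ha as [t [Ht Hat]].
    destruct Ht as [[a1 [g [a2 [E1 [E2 E3]]]]]|[p [g2 [q [[p' [g1 [m [[a1 [g [a2 [E1 [E2 E3]]]]] [_ E4]]]]] [[b1 [g3 [b2 [F1 [F2 F3]]]]] E5]]]]]];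
      unfold single in *; subst.
    - exists g, (op M a g a). auto.
    - exists g, (op M (op M (op M a g a) g1 m) g2 (op M a g3 a)). split; auto.
      right. exists m, g1, g2, g3. auto. }
  split; [|split]; intro a; destruct (K a) as [g [t [Hat [E|[m [g1 [g2 [g3 E]]]]]]]]; subst t.
  - exists (op M (op M a g a) g a). split.
    + apply mk3; unfold single, full; auto.
    + apply le_trans with (op M a g a); auto. apply le_opr; auto.
  - exists (op M (op M a g (op M (op M a g1 m) g2 a)) g3 a). split.
    + apply mk3; unfold single, full; auto.
    + rewrite !op_assoc in *. auto.
  - exists (op M (op M a g a) g a). split.
    + apply mk3; unfold single, full; auto.
    + apply le_trans with (op M a g a); auto. apply le_opr; auto.
  - exists (op M (op M (op M (op M a g a) g1 m) g2 a) g3 a). split.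
    + apply mk3; unfold single, full; auto.
    + rewrite !op_assoc in *. auto.
  - exists (op M (op M a g a) g a). split.
    + apply mk3; unfold single, full; auto.
    + rewrite op_assoc. apply le_trans with (op M a g a); auto. apply le_opl; auto.
  - exists (op M (op M a g a) g1 (op M (op M m g2 a) g3 a)). split.
    + apply mk3; unfold single, full; auto.
    + rewrite !op_assoc in *. auto.
Qed.

Lemma cr_to_2 : completely_regular M -> forall a : M,
  let aGa := fun a : M => gprod M (single M a) (single M a) in
  set_eq M (bi_gen M (single M a)) (bi_gen M (aGa a)) /\
  set_eq M (bi_gen M (aGa a))
    (bi_gen M (gprod M (gprod M (gprod M (aGa a) (full M)) (single M a)) (single M a))).
Proof.
  intros [Hr [Hl Hrr]] a aGa.
  destruct (Hr a) as [t1 [[p [nu [b [[a1 [mu [z [E1 [_ E2]]]]] [E3 E4]]]]] H1]].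
  destruct (Hl a) as [t2 [[p2 [be [b2 [[y [al [a2 [_ [F1 F2]]]]] [F3 F4]]]]] H2]].
  destruct (Hrr a) as [t3 [[p3 [de [x [[a3 [ga [a4 [G1 [G2 G3]]]]] [_ G4]]]]] H3]].
  unfold single in *; subst.
  set (mm := op M (op M x mu z) nu y).
  assert (Hw : le M a (op M (op M (op M (op M a ga a) de mm) al a) be a)).
  { replace (op M (op M (op M (op M a ga a) de mm) al a) be a)
      with (op M (op M (op M (op M a ga a) de x) mu z) nu (op M (op M y al a) be a))
      by (unfold mm; rewrite !op_assoc; reflexivity).
    apply le_trans with (op M (op M a mu z) nu a); auto.
    apply le_trans with (op M (op M (op M (op M a ga a) de x) mu z) nu a).
    - apply le_opr, le_opr; auto.
    - apply le_opl; auto. }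
  assert (S1 : subset M (bi_gen M (single M a)) (bi_gen M (aGa a))).
  { apply bi_gen_sub. intros u Hu. unfold single in Hu; subst u.
    apply down_in2 with (op M (op M (op M a ga a) de mm) al (op M a be a)).
    - apply mk3; [exists a, ga, a; unfold single; auto | exact I | exists a, be, a; unfold single; auto].
    - rewrite !op_assoc in *. auto. }
  assert (S2 : subset M (bi_gen M (aGa a)) (bi_gen M (single M a))).
  { apply bi_gen_sub. intros u [c1 [g [c2 [C1 [C2 C3]]]]]. unfold single in *; subst.
    apply down_in2 with (op M (op M a mu (op M z nu a)) g a).
    - apply mk3; unfold single, full; auto.
    - apply le_trans with (op M (op M (op M a mu z) nu a) g a);
        [apply le_opr; auto | rewrite !op_assoc; apply le_refl]. }
  assert (S3 : subset M (bi_gen M (single M a))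
    (bi_gen M (gprod M (gprod M (gprod M (aGa a) (full M)) (single M a)) (single M a)))).
  { apply bi_gen_sub. intros u Hu. unfold single in Hu; subst u.
    apply down_in with (op M (op M (op M (op M a ga a) de mm) al a) be a); auto.
    apply mk3; [|reflexivity|reflexivity]. exists (op M a ga a), de, mm.
    split; [exists a, ga, a; unfold single; auto | split; [exact I | reflexivity]]. }
  split; apply set_eq_of; auto.
  - intros u Hu. apply S3, S2, Hu.
  - apply bi_gen_sub. intros u Hu.
    destruct Hu as [p [g4 [b [[p' [g3 [b' [[p'' [g2 [m [[a1 [g1 [a2 [E1 [E2 E3]]]]] [_ E4]]]]] [E5 E6]]]]] [E7 E8]]]]].
    unfold single in *; subst.
    apply down_in2 with (op M (op M (op M a g1 a) g2 m) g3 (op M a g4 a)).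
    + apply mk3; [exists a, g1, a; unfold single; auto | exact I | exists a, g4, a; unfold single; auto].
    + rewrite !op_assoc. apply le_refl.
Qed.
End T.

Theorem proposition5 (M : poGammaSemigroup) :
  let aGa := fun a : M => gprod M (single M a) (single M a) in
  (completely_regular M <->
     (forall a : M,
        set_eq M (bi_gen M (single M a)) (bi_gen M (aGa a)) /\
        set_eq M (bi_gen M (aGa a))
          (bi_gen M (gprod M (gprod M (gprod M (aGa a) (full M)) (single M a))
                       (single M a)))))
  /\
  (completely_regular M <->
     (forall a : M, set_eq M (bi_gen M (single M a)) (bi_gen M (aGa a)))).
Proof.
  intros aGa. split; split.
  - intros H a. apply cr_to_2; auto.
  - intros H. apply three_to_cr. intro a. apply (H a).
  - intros H a. apply (cr_to_2 M H a).
  - apply three_to_cr.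
Qed.
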